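(* If $G$ is a noncyclic finite $p$-group and $N$ is a normal subgroup of $G$ such that $\eta(G/N) = \eta(G)$, then $N \le G'$.
   Context: A cyclic subgroup $C$ of a group $G$ is maximal cyclic if there is no cyclic subgroup $D$ of $G$ with $C < D$. $\eta(G)$ denotes the number of conjugacy classes of maximal cyclic subgroups of $G$. $G'$ is the derived subgroup of $G$. *)

(* Defs.v *)
From mathcomp Require Import all_boot all_order all_fingroup all_solvable.
Set Implicit Arguments. Unset Strict Implicit. Unset Printing Implicit Defensive.
Local Open Scope group_scope.

Definition max_cyclic_subgroups (gT : finGroupType) (G : {set gT}) :
    {set {group gT}} :=
  [set C : {group gT} | [max C | (C \subset G) && cyclic C]].

Definition eta (gT : finGroupType) (G : {group gT}) : nat :=
  #|[set orbit 'JG G C | C in max_cyclic_subgroups G]|.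

(* Main.v *)
Require Import Defs.
From mathcomp Require Import all_boot all_order all_fingroup all_solvable.
Set Implicit Arguments. Unset Strict Implicit. Unset Printing Implicit Defensive.
Local Open Scope group_scope.

Lemma orbit_quo (gT : finGroupType) (G N M : {group gT}) :
  G \subset 'N(N) ->
  [set (X / N)%G | X in orbit 'JG G M] = orbit 'JG (G / N) (M / N)%G.
Proof.
move=> nNG; apply/setP=> Y; apply/imsetP/idP.
- case=> X /orbitP [g Gg <-] ->; apply/orbitP; exists (coset N g).
    exact: mem_quotient.
  by apply: val_inj => /=; rewrite quotientJ // (subsetP nNG).
- move/orbitP=> [a /morphimP [g nNg Gg ->] <-]; exists ('JG%act M g).
    by apply/orbitP; exists g.
  by apply: val_inj => /=; rewrite quotientJ.
Qed.
Lemma lift_max (gT : finGroupType) (G N : {group gT}) (C : {group coset_of N}) x y :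
  G \subset 'N(N) -> C \in max_cyclic_subgroups (G / N) ->
  C :=: <[coset N x]> -> y \in G -> coset N y = coset N x ->
  exists2 M : {group gT}, M \in max_cyclic_subgroups G & (y \in M) /\ (M / N)%G = C.
Proof.
move=> nNG; rewrite inE => /maxgroupP [/andP [sCG cycC] maxC] defC Gy eqy.
have [M maxM sYM] := @maxgroup_exists _ (fun M : {group gT} => (M \subset G) && cyclic M) <[y]>%G
  (ltac:(by rewrite /= cycle_subG Gy cycle_cyclic)).
have [/andP [sMG cycM] _] := maxgroupP maxM.
exists M; first by rewrite inE.
split; first by rewrite -cycle_subG.
have yM : y \in M by rewrite -cycle_subG.
apply: val_inj => /=; apply: maxC.
  by rewrite quotientS // quotient_cyclic.
by rewrite defC cycle_subG -eqy mem_quotient.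
Qed.
Lemma cover_cyclic (aT : finGroupType) (p : nat) (A B : {group aT}) :
  p.-group A -> abelian A -> B \subset A -> B :!=: 1 ->
  (forall a, a \in A -> exists2 C : {group aT}, cyclic C /\ C \subset A & B \subset C /\ a \in C) ->
  cyclic A.
Proof.
move=> pA abA sBA ntB cov.
have pB : p.-group B := pgroupS sBA pA.
have [p_pr _ _] := pgroup_pdiv pB ntB.
have key : forall C : {group aT}, cyclic C -> C \subset A -> B \subset C ->
    'Ohm_1(C) = 'Ohm_1(B) /\ #|'Ohm_1(B)| = p.
  move=> C cycC sCA sBC.
  have pC : p.-group C := pgroupS sCA pA.
  have ntC : C :!=: 1 by apply: contraNneq ntB => C1; apply/eqP/trivgP; rewrite -C1.
  have oC := Ohm1_cyclic_pgroup_prime cycC pC ntC.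
  have sOBC : 'Ohm_1(B) \subset 'Ohm_1(C) := OhmS 1 sBC.
  have ntOB : 'Ohm_1(B) :!=: 1 by rewrite Ohm1_eq1.
  have pOB : p.-group 'Ohm_1(B) := pgroupS (Ohm_sub 1 B) pB.
  have [_ pdvd _] := pgroup_pdiv pOB ntOB.
  have le : #|'Ohm_1(C)| <= #|'Ohm_1(B)| by rewrite oC dvdn_leq.
  have E : 'Ohm_1(C) = 'Ohm_1(B).
    by apply/eqP; rewrite eq_sym eqEcard sOBC le.
  by split=> //; rewrite -E.
have [C1 [cycC1 sC1A] [sBC1 _]] := cov 1 (group1 A).
have [_ oB] := key C1 cycC1 sC1A sBC1.
have sOA : 'Ohm_1(A) \subset 'Ohm_1(B).
  apply/subsetP => a.
  rewrite (OhmEabelian pA (abelianS (Ohm_sub 1 A) abA)) inE => /andP [Aa ap].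
  have [C [cycC sCA] [sBC aC]] := cov a Aa.
  have [E _] := key C cycC sCA sBC.
  have abC := cyclic_abelian cycC.
  rewrite -E (OhmEabelian (pgroupS sCA pA) (abelianS (Ohm_sub 1 C) abC)) inE aC.
  exact: ap.
rewrite (abelian_rank1_cyclic abA) (rank_pgroup pA) (p_rank_abelian p abA).
have := dvdn_leq_log p (cardG_gt0 'Ohm_1(B)) (cardSg sOA).
by rewrite oB (logn_prime p p_pr) eqxx.
Qed.

Theorem corollary4p4 (gT : finGroupType) (p : nat) (G N : {group gT}) :
  prime p -> p.-group G -> ~~ cyclic G -> N <| G ->
  eta (G / N)%G = eta G -> N \subset G^`(1).
Proof.
move=> p_pr pG ncG nsNG eta_eq.
have [//|nsND] := boolP (N \subset G^`(1)).
exfalso.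
set D := G^`(1) in nsND *.
have sNG := normal_sub nsNG.
have nNG : G \subset 'N(N) := normal_norm nsNG.
have nDG : G \subset 'N(D) := normal_norm (der_normal 1 G).
pose S' := [set M in max_cyclic_subgroups G | (M / N)%G \in max_cyclic_subgroups (G / N)].
pose F := fun O : {set {group gT}} => [set (X / N)%G | X in O].
pose O' := [set orbit 'JG G M | M in S'].
have step1 : eta (G / N)%G = #|F @: O'|.
  rewrite /eta; congr #|pred_of_set _|; apply/setP => Z; apply/imsetP/imsetP.
  - case=> C Cmax ->.
    have Cmax' := Cmax; rewrite inE in Cmax'.
    have [/andP [sCG cycC] _] := maxgroupP Cmax'.
    have [xb defC] := cyclicP cycC.
    have : xb \in G / N by rewrite (subsetP sCG) // defC cycle_id.
    case/morphimP => x nNx Gx xbE.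
    have defC' : C :=: <[coset N x]> by rewrite defC xbE.
    have [M Mmax [xM eM]] := lift_max nNG Cmax defC' Gx (erefl _).
    exists (orbit 'JG G M).
      by apply/imsetP; exists M => //; rewrite inE Mmax eM Cmax.
    by rewrite /F orbit_quo // eM.
  - case=> O /imsetP [M SM ->] ->.
    exists (M / N)%G; first by move: SM; rewrite inE => /andP [].
    by rewrite /F orbit_quo.
have step3 : #|O'| <= eta G.
  apply: subset_leq_card; apply: imsetS.
  by apply/subsetP => M; rewrite inE => /andP [].
suffices step2 : #|F @: O'| < #|O'|.
  by move: (leq_trans step2 step3); rewrite -step1 eta_eq ltnn.
rewrite ltn_neqAle leq_imset_card andbT; apply/negP => /imset_injP inj.
have Hstar : forall M1 M2 : {group gT}, M1 \in S' -> M2 \in S' ->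
    (M1 / N)%G = (M2 / N)%G -> M1 / D = M2 / D.
  move=> M1 M2 S1 S2 e12.
  have M1G : M1 \subset G.
    by move: S1; rewrite !inE => /andP [/maxgroupP [/andP [] //]].
  have e : orbit 'JG G M1 = orbit 'JG G M2.
    apply: inj; [exact: imset_f S1 | exact: imset_f S2 | ].
    by rewrite /F !orbit_quo // e12.
  have := orbit_refl 'JG G M2; rewrite -e => /orbitP [g Gg e'].
  have -> : (M2 : {set gT}) = M1 :^ g by rewrite -e'.
  rewrite quotientJ ?(subsetP nDG) //.
  apply/esym/normP.
  have abA : abelian (G / D) := sub_der1_abelian (subxx _).
  apply: (subsetP (sub_abelian_norm abA (quotientS D M1G))).
  exact: mem_quotient.
have Cov : forall g, g \in G -> exists2 C : {group coset_of D},
    cyclic C /\ C \subset G / D & N / D \subset C /\ coset D g \in C.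
  move=> g Gg.
  have [C0 maxC0 sgC0] := @maxgroup_exists _
    (fun C : {group coset_of N} => (C \subset G / N) && cyclic C) <[coset N g]>%G
    (ltac:(by rewrite /= cycle_subG mem_quotient // cycle_cyclic)).
  have C0max : C0 \in max_cyclic_subgroups (G / N) by rewrite inE.
  have [/andP [sC0 cycC0] _] := maxgroupP maxC0.
  have [xb defC0] := cyclicP cycC0.
  have : xb \in G / N by rewrite (subsetP sC0) // defC0 cycle_id.
  case/morphimP => x nNx Gx xbE.
  have defC0' : C0 :=: <[coset N x]> by rewrite defC0 xbE.
  have [M1 M1max [xM1 eM1]] := lift_max nNG C0max defC0' Gx (erefl _).
  have M1S : M1 \in S' by rewrite inE M1max eM1 C0max.
  have M1G : M1 \subset G.
    by move: M1max; rewrite inE => /maxgroupP [/andP [] //].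
  have ally : forall y, y \in G -> coset N y = coset N x -> coset D y \in M1 / D.
    move=> y Gy ey.
    have [M2 M2max [yM2 eM2]] := lift_max nNG C0max defC0' Gy ey.
    have M2S : M2 \in S' by rewrite inE M2max eM2 C0max.
    by rewrite (Hstar M1 M2 M1S M2S (etrans eM1 (esym eM2))) mem_quotient.
  have sND : N / D \subset M1 / D.
    apply/subsetP => nb /morphimP [n nDn Nn ->].
    have Gn : n \in G := subsetP sNG n Nn.
    have xnG : x * n \in G by rewrite groupM.
    have e : coset N (x * n) = coset N x.
      exact: coset_kerr.
    have h1 := ally _ xnG e; have h0 := ally _ Gx (erefl _).
    change (coset D n \in M1 / D).
    have -> : coset D n = (coset D x)^-1 * coset D (x * n).
      by rewrite morphM ?mulKg // (subsetP nDG).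
    by rewrite groupM ?groupV.
  exists (M1 / D)%G.
    split; last exact: quotientS.
    apply: quotient_cyclic.
    by move: M1max; rewrite inE => /maxgroupP [/andP [] //].
  split=> //.
  have : coset N g \in (M1 / N).
    have -> : M1 / N = C0 by rewrite -eM1.
    by rewrite -cycle_subG.
  move=> gM1N.
  have : g \in coset N @*^-1 (M1 / N) by rewrite mem_morphpre // (subsetP nNG).
  rewrite quotientK ?(subset_trans M1G nNG) // => /mulsgP [n m Nn Mm ->].
  have Gm : m \in G := subsetP M1G m Mm.
  have Gn : n \in G := subsetP sNG n Nn.
  rewrite morphM ?(subsetP nDG) // groupM //; last exact: mem_quotient.
  by rewrite (subsetP sND) // mem_quotient.
have cycA : cyclic (G / D).
  apply: (@cover_cyclic _ p (G / D)%G (N / D)%G).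
  - exact: quotient_pgroup.
  - exact: sub_der1_abelian.
  - exact: quotientS.
  - by rewrite -subG1 quotient_sub1 // (subset_trans sNG nDG).
  - move=> a /morphimP [g nDg Gg ->]; exact: Cov.
by move: ncG; rewrite (cyclic_nilpotent_quo_der1_cyclic (pgroup_nil pG) cycA).
Qed.
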